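(* Let $\Gamma_C=(\mathcal{S},\mathcal{P},\mathcal{E})$ be a correspondence graph with body graph $\Gamma_B$, and let $\mathbf{x},\mathbf{y}:\mathcal{S}\to\mathbb{R}^d$. The node-patch frameworks $(\Gamma_C,\mathbf{x})$ and $(\Gamma_C,\mathbf{y})$ are equivalent if and only if the frameworks $(\Gamma_B,\mathbf{x})$ and $(\Gamma_B,\mathbf{y})$ are equivalent.
   Context: $\mathcal{S}=\{1,\dots,N\}$, $\mathcal{P}=\{P_1,\dots,P_M\}$ with $P_i\subseteq\mathcal{S}$, and $(k,i)\in\mathcal{E}$ iff $k\in P_i$. The body graph $\Gamma_B$ has vertex set $\mathcal{S}$ and an edge between $k\ne l$ iff $k,l\in P_i$ for some $i$. A rigid transform is $x\mapsto Qx+t$ with $Q$ orthogonal. Node-patch frameworks $(\Gamma_C,\mathbf{x})$, $(\Gamma_C,\mathbf{y})$ are equivalent if there exist rigid transforms $\mathcal{Q}_1,\dots,\mathcal{Q}_M$ with $\mathbf{x}(k)=\mathcal{Q}_i\mathbf{y}(k)$ for all $(k,i)\in\mathcal{E}$. Frameworks $(G,\mathbf{p})$, $(G,\mathbf{q})$ of a graph $G$ are equivalent if $\|\mathbf{p}(u)-\mathbf{p}(v)\|=\|\mathbf{q}(u)-\mathbf{q}(v)\|$ for every edge $(u,v)$ of $G$ (Euclidean norm). *)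

(* Defs.v *)
From HB Require Import structures.
From mathcomp Require Import all_boot all_order all_algebra.
From mathcomp Require Import reals.
Set Implicit Arguments. Unset Strict Implicit. Unset Printing Implicit Defensive.
Import Order.TTheory GRing.Theory Num.Theory.
Local Open Scope ring_scope.

Definition enorm (R : realType) (d : nat) (v : 'cV[R]_d) : R :=
  Num.sqrt (\sum_(i < d) v i 0 ^+ 2).

Definition orthogonal_mx (R : realType) (d : nat) (Q : 'M[R]_d) : Prop :=
  Q^T *m Q = 1%:M.

Record rigid (R : realType) (d : nat) := Rigid {
  rigid_Q : 'M[R]_d;
  rigid_t : 'cV[R]_d;
  rigid_orth : orthogonal_mx rigid_Q }.

Definition apply_rigid (R : realType) (d : nat) (T : rigid R d) (v : 'cV[R]_d)
  : 'cV[R]_d := rigid_Q T *m v + rigid_t T.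

(* Correspondence graph: nodes S = 'I_N, patches P : 'I_M -> {set 'I_N};
   (k, i) in E iff k \in P i. *)
Definition in_E (N M : nat) (P : 'I_M -> {set 'I_N}) (k : 'I_N) (i : 'I_M) : bool :=
  k \in P i.

Definition body_edge (N M : nat) (P : 'I_M -> {set 'I_N}) (k l : 'I_N) : Prop :=
  k != l /\ exists i : 'I_M, (k \in P i) && (l \in P i).

Definition np_equivalent (R : realType) (d N M : nat) (P : 'I_M -> {set 'I_N})
  (x y : 'I_N -> 'cV[R]_d) : Prop :=
  exists Qs : 'I_M -> rigid R d,
    forall (k : 'I_N) (i : 'I_M), in_E P k i -> x k = apply_rigid (Qs i) (y k).

Definition fw_equivalent (R : realType) (d N : nat) (edge : 'I_N -> 'I_N -> Prop)
  (p q : 'I_N -> 'cV[R]_d) : Prop :=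
  forall u v : 'I_N, edge u v -> enorm (p u - p v) = enorm (q u - q v).

(* Main.v *)
Require Import Defs.
From HB Require Import structures.
From mathcomp Require Import all_boot all_order all_algebra.
From mathcomp Require Import reals.
From mathcomp Require Import ring lra.
From Stdlib Require Import IndefiniteDescription.
Set Implicit Arguments. Unset Strict Implicit. Unset Printing Implicit Defensive.
Import Order.TTheory GRing.Theory Num.Theory.
Local Open Scope ring_scope.

Section Key.
Variables (R : realType) (d : nat).
Implicit Types (u v w x : 'cV[R]_d) (Q : 'M[R]_d).

Definition dotv u v : R := (u^T *m v) 0 0.

Lemma dotvC u v : dotv u v = dotv v u.
Proof. by rewrite /dotv -{1}(trmxK v) -trmx_mul mxE. Qed.

Lemma dotvBl u v x : dotv (u - v) x = dotv u x - dotv v x.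
Proof. by rewrite /dotv (raddfB (@trmx R d 1)) mulmxBl !mxE. Qed.

Lemma dotvBr u v x : dotv x (u - v) = dotv x u - dotv x v.
Proof. by rewrite /dotv mulmxBr !mxE. Qed.

Lemma outerE w x : (w *m w^T) *m x = dotv w x *: w.
Proof. by rewrite -mulmxA [w^T *m x]mx11_scalar mul_mx_scalar. Qed.

Lemma dotv_orth Q u v : orthogonal_mx Q -> dotv (Q *m u) (Q *m v) = dotv u v.
Proof. by move=> hQ; rewrite /dotv trmx_mul mulmxA -(mulmxA u^T) hQ mulmx1. Qed.

Lemma dotv_ge0 u : 0 <= dotv u u.
Proof.
rewrite /dotv mxE; apply: sumr_ge0 => i _; rewrite mxE -expr2; exact: sqr_ge0.
Qed.

Lemma enorm_dot u : enorm u = Num.sqrt (dotv u u).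
Proof. by rewrite /enorm /dotv mxE; congr Num.sqrt; apply: eq_bigr => i _; rewrite mxE expr2. Qed.

Lemma dotv_eq0 u : (dotv u u == 0) = (u == 0).
Proof.
apply/idP/idP; last by move/eqP->; rewrite /dotv mulmx0 mxE.
rewrite /dotv mxE psumr_eq0; last by move=> i _; rewrite mxE -expr2 sqr_ge0.
move/allP=> h; apply/eqP/matrixP => i j; rewrite (ord1 j) mxE.
have := h i (mem_index_enum _); rewrite mxE /= mulf_eq0 orbb => /eqP->//.
Qed.

Lemma key (I : eqType) (s : seq I) (uu vv : I -> 'cV[R]_d) :
  {in s &, forall k l, dotv (uu k) (uu l) = dotv (vv k) (vv l)} ->
  exists Q, orthogonal_mx Q /\ {in s, forall k, Q *m vv k = uu k}.
Proof.
elim: s => [|a s IH] h.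
  by exists 1%:M; split => //; rewrite /orthogonal_mx trmx1 mul1mx.
have [|Q [hQ hQs]] := IH.
  by move=> k l ks ls; apply: h; rewrite inE ?ks ?ls orbT.
set c := Q *m vv a.
have hc : forall k, k \in s -> dotv c (uu k) = dotv (uu a) (uu k).
  move=> k ks; rewrite -{1}(hQs k ks) /c dotv_orth // h ?inE ?ks ?eqxx ?orbT //.
have hcc : dotv c c = dotv (uu a) (uu a).
  by rewrite /c dotv_orth // h ?inE ?eqxx.
set w := c - uu a.
have [w0|wn0] := eqVneq w 0.
  exists Q; split => // k; rewrite inE => /orP[/eqP->|ks]; last exact: hQs.
  by apply/eqP; rewrite -subr_eq0 -/c -/w w0.
have ww0 : dotv w w != 0 by rewrite dotv_eq0.
set H := 1%:M - (2 / dotv w w) *: (w *m w^T).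
have HT : H^T = H by rewrite /H linearB /= linearZ /= trmx_mul trmxK trmx1.
have MM : (w *m w^T) *m (w *m w^T) = dotv w w *: (w *m w^T).
  by rewrite mulmxA outerE scalemxAl.
have HH : H *m H = 1%:M.
  rewrite /H mulmxBl mul1mx mulmxBr mulmx1 -!scalemxAl -scalemxAr MM scalerA.
  rewrite scalerA.
  have -> : 2 / dotv w w * (2 / dotv w w) * dotv w w = 2 / dotv w w + 2 / dotv w w.
    by field.
  by rewrite scalerDl opprB addrK subrK.
have hwc : dotv w w = 2 * dotv w c.
  rewrite /w !dotvBl !dotvBr (dotvC (uu a) c) hcc; ring.
have hwk : forall k, k \in s -> dotv w (uu k) = 0.
  by move=> k ks; rewrite /w dotvBl hc // subrr.
exists (H *m Q); split.
  by rewrite /orthogonal_mx trmx_mul -mulmxA (mulmxA H^T) HT HH mul1mx.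
move=> k; rewrite inE => /orP[/eqP->|ks].
  rewrite -mulmxA -/c /H mulmxBl mul1mx -scalemxAl outerE scalerA.
  have wc0 : dotv w c != 0 by apply: contra ww0; rewrite hwc => /eqP->; rewrite mulr0.
  have -> : 2 / dotv w w * dotv w c = 1 by rewrite hwc; field.
  by rewrite scale1r /w opprB addrC subrK.
rewrite -mulmxA hQs // /H mulmxBl mul1mx -scalemxAl outerE hwk // scale0r.
by rewrite scaler0 subr0.
Qed.
End Key.

Lemma polar (R : realType) (d : nat) (a b : 'cV[R]_d) :
  dotv a b = (dotv a a + dotv b b - dotv (a - b) (a - b)) / 2.
Proof. rewrite !dotvBl !dotvBr (dotvC b a); field; done. Qed.

Theorem proposition6 (R : realType) (d N M : nat) (P : 'I_M -> {set 'I_N})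
  (x y : 'I_N -> 'cV[R]_d) :
  np_equivalent P x y <-> fw_equivalent (body_edge P) x y.
Proof.
split.
  move=> [Qs hQs] u v [_ [i /andP[ui vi]]].
  rewrite (hQs u i ui) (hQs v i vi) /apply_rigid.
  have -> : rigid_Q (Qs i) *m y u + rigid_t (Qs i) - (rigid_Q (Qs i) *m y v + rigid_t (Qs i))
      = rigid_Q (Qs i) *m (y u - y v).
    by rewrite mulmxBr opprD addrACA subrr addr0.
  by rewrite !enorm_dot dotv_orth //; apply: rigid_orth.
move=> hfw.
have hi : forall i, exists T : rigid R d,
    forall k, in_E P k i -> x k = apply_rigid T (y k).
  move=> i; case: (set_0Vmem (P i)) => [P0 | [k0 k0i]].
    have o1 : orthogonal_mx (1%:M : 'M[R]_d).
      by rewrite /orthogonal_mx trmx1 mul1mx.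
    by exists (Rigid 0 o1) => k; rewrite /in_E P0 inE.
  have D : forall k l, k \in P i -> l \in P i ->
      dotv (x k - x l) (x k - x l) = dotv (y k - y l) (y k - y l).
    move=> k l ki li; have [->|kl] := eqVneq k l; first by rewrite !subrr.
    have := hfw k l (conj kl (ex_intro _ i _)); rewrite ki li => /(_ erefl).
    by rewrite !enorm_dot => /eqP; rewrite eqr_sqrt ?dotv_ge0 // => /eqP.
  have [Q [hQ hQs]] := @key R d _ (enum (P i)) (fun k => x k - x k0) (fun k => y k - y k0)
     ltac:(move=> k l; rewrite !mem_enum => ki li;
           rewrite polar (polar (y k - _)) !D //;
           by rewrite opprB addrA subrK opprB addrA subrK D).
  exists (Rigid (x k0 - Q *m y k0) hQ) => k; rewrite /in_E => ki.
  have := hQs k; rewrite mem_enum mulmxBr => /(_ ki) e.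
  by rewrite /apply_rigid /= -[x k](subrK (x k0)) -e addrAC addrA.
by have [Qs hQs] := functional_choice _ hi; exists Qs => k i; exact: hQs.
Qed.
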